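(* Let $\mathcal A$ be a commutative unital $C^*$-algebra, let $(E,\langle\cdot,\cdot\rangle)$ be a Hilbert $\mathcal A$-module in which every closed submodule is orthogonally complemented, and let $\xi\in E$ with $\langle\xi,\xi\rangle$ invertible. Equip $E$ with the standard $\mathcal A$-2-inner product $\langle x,y|z\rangle=\langle x,y\rangle\langle z,z\rangle-\langle x,z\rangle\langle z,y\rangle$, and suppose $\{x_i\}_{i\in\mathbb N}\subset E$ satisfies, for some reals $0<A\le B$ and all $x\in E$, $$A\langle x,x|\xi\rangle\le\sum_{i}\langle x,x_i|\xi\rangle\langle x_i,x|\xi\rangle\le B\langle x,x|\xi\rangle.$$ Let $L_\xi^{\perp}=\{x\in E:\langle a\xi,x\rangle=0\ \text{for all } a\in\mathcal A\}$. Then there exist reals $0<C\le D$ such that $C\langle x,x\rangle\le\sum_i\langle x,x_i\rangle\langle x_i,x\rangle\le D\langle x,x\rangle$ for all $x\in L_\xi^\perp$; that is, $\{x_i\}$ is a frame for $L_\xi^\perp$.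
   Context: A Hilbert $\mathcal A$-module is a left $\mathcal A$-module $E$ with an $\mathcal A$-valued inner product $\langle\cdot,\cdot\rangle$ satisfying $\langle x,x\rangle\ge0$, $\langle x,x\rangle=0$ iff $x=0$, $\langle x,y\rangle=\langle y,x\rangle^*$, $\langle ax,by\rangle=a^*\langle x,y\rangle b$, complex-linear in the second variable, and complete for $\|x\|=\|\langle x,x\rangle\|^{1/2}$. Inequalities between elements of $\mathcal A$ refer to the order on self-adjoint elements; all series converge in norm. *)

(* Defs.v *)
From mathcomp Require Import all_boot all_order all_algebra.
From mathcomp Require Export complex.
From mathcomp Require Export reals.
Set Implicit Arguments. Unset Strict Implicit. Unset Printing Implicit Defensive.
Import Order.TTheory GRing.Theory Num.Theory.
Local Open Scope ring_scope.

Section CStar.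
Variable R : realType.
Local Notation C := R[i].
Variable A : comAlgType C.
Variables (star : A -> A) (nrm : A -> R).

Definition cle (a b : A) : Prop := exists c : A, b - a = star c * c.

Definition cvgA (u : nat -> A) (l : A) : Prop :=
  forall e : R, 0 < e -> exists N : nat, forall n, (N <= n)%N -> nrm (u n - l) < e.

Definition series_cvgA (u : nat -> A) (s : A) : Prop :=
  cvgA (fun n => \sum_(i < n) u i) s.

Definition cauchyA (u : nat -> A) : Prop :=
  forall e : R, 0 < e -> exists N : nat, forall m n, (N <= m)%N -> (N <= n)%N ->
    nrm (u m - u n) < e.

Record is_comm_unital_Cstar : Prop := {
  nrm_eq0 : forall a, nrm a = 0 -> a = 0;
  nrm_triangle : forall a b, nrm (a + b) <= nrm a + nrm b;
  nrm_scale : forall (c : C) a, nrm (c *: a) = Normc.normc c * nrm a;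
  nrm_submult : forall a b, nrm (a * b) <= nrm a * nrm b;
  nrm_complete : forall u, cauchyA u -> exists l, cvgA u l;
  star_add : forall a b, star (a + b) = star a + star b;
  star_scale : forall (c : C) a, star (c *: a) = (conjc c) *: star a;
  star_mul : forall a b, star (a * b) = star b * star a;
  star_invol : forall a, star (star a) = a;
  Cstar_identity : forall a, nrm (star a * a) = nrm a ^+ 2
}.

Section Hilbert.
Variable E : lmodType A.
Variable ip : E -> E -> A.

Definition nrmE (x : E) : R := Num.sqrt (nrm (ip x x)).

Definition cvgE (u : nat -> E) (l : E) : Prop :=
  forall e : R, 0 < e -> exists N : nat, forall n, (N <= n)%N -> nrmE (u n - l) < e.

Definition cauchyE (u : nat -> E) : Prop :=
  forall e : R, 0 < e -> exists N : nat, forall m n, (N <= m)%N -> (N <= n)%N ->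
    nrmE (u m - u n) < e.

Record is_Hilbert_module : Prop := {
  ip_pos : forall x, cle 0 (ip x x);
  ip_def : forall x, ip x x = 0 -> x = 0;
  ip_adj : forall x y, ip x y = star (ip y x);
  ip_scale : forall (a b : A) x y, ip (a *: x) (b *: y) = star a * ip x y * b;
  ip_addr : forall x y z, ip x (y + z) = ip x y + ip x z;
  ip_Clinr : forall (c : C) x y, ip x ((c%:A : A) *: y) = c *: ip x y;
  ip_complete : forall u, cauchyE u -> exists l, cvgE u l
}.

Definition submodule (M : E -> Prop) : Prop :=
  M 0 /\ (forall x y, M x -> M y -> M (x + y)) /\ (forall (a : A) x, M x -> M (a *: x)).

Definition closed_set (M : E -> Prop) : Prop :=
  forall (u : nat -> E) (l : E), (forall n, M (u n)) -> cvgE u l -> M l.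

Definition orth_complemented (M : E -> Prop) : Prop :=
  forall x : E, exists m n : E,
    [/\ M m, (forall y, M y -> ip y n = 0) & x = m + n].

Definition ip2 (x y z : E) : A := ip x y * ip z z - ip x z * ip z y.

Definition Lperp (xi : E) (x : E) : Prop := forall a : A, ip (a *: xi) x = 0.

End Hilbert.
End CStar.

(* Main.v *)
Require Import Defs.
From mathcomp Require Import all_boot all_order all_algebra.
From mathcomp Require Import complex reals.
From mathcomp Require Import ring lra.
Set Implicit Arguments. Unset Strict Implicit. Unset Printing Implicit Defensive.
Import Order.TTheory GRing.Theory Num.Theory.
Local Open Scope ring_scope.

Lemma normc_real (R : realType) (r : R) : Normc.normc (real_complex R r) = `|r|.
Proof. by rewrite /= expr0n /= addr0 sqrtr_sqr. Qed.

Lemma conjc_realR (R : realType) (r : R) : conjc (real_complex R r) = real_complex R r.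
Proof. by rewrite /conjc /= oppr0. Qed.

Lemma rcM (R : realType) (r s : R) : real_complex R r * real_complex R s = real_complex R (r * s).
Proof. by rewrite -rmorphM. Qed.

Lemma rc1 (R : realType) : real_complex R 1 = 1.
Proof. by []. Qed.

Lemma rcD (R : realType) (r s : R) : real_complex R r + real_complex R s = real_complex R (r + s).
Proof. by rewrite -rmorphD. Qed.


Lemma nrm_sc (R : realType) (A : comAlgType R[i]) (star : A -> A) (nrm : A -> R)
  (HA : is_comm_unital_Cstar star nrm) r a : nrm (real_complex R r *: a) = `|r| * nrm a.
Proof. by rewrite (nrm_scale HA) normc_real. Qed.

Lemma nrm0 (R : realType) (A : comAlgType R[i]) (star : A -> A) (nrm : A -> R)
  (HA : is_comm_unital_Cstar star nrm) : nrm 0 = 0.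
Proof. by rewrite -(scale0r (0 : A)) -[0 : R[i]]/(real_complex R 0) (nrm_sc HA) normr0 mul0r. Qed.

Lemma nrmN (R : realType) (A : comAlgType R[i]) (star : A -> A) (nrm : A -> R)
  (HA : is_comm_unital_Cstar star nrm) a : nrm (- a) = nrm a.
Proof.
have -> : - a = real_complex R (-1) *: a.
  by rewrite rmorphN1 scaleN1r.
by rewrite (nrm_sc HA) normrN normr1 mul1r.
Qed.

Lemma nrm_ge0 (R : realType) (A : comAlgType R[i]) (star : A -> A) (nrm : A -> R)
  (HA : is_comm_unital_Cstar star nrm) a : 0 <= nrm a.
Proof.
have := nrm_triangle HA a (- a); rewrite subrr (nrm0 HA) (nrmN HA); lra.
Qed.

Lemma nrmB (R : realType) (A : comAlgType R[i]) (star : A -> A) (nrm : A -> R)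
  (HA : is_comm_unital_Cstar star nrm) a b : nrm (a - b) = nrm (b - a).
Proof. by rewrite -(nrmN HA) opprB. Qed.

Lemma nrm_tri3 (R : realType) (A : comAlgType R[i]) (star : A -> A) (nrm : A -> R)
  (HA : is_comm_unital_Cstar star nrm) a b c : nrm (a - c) <= nrm (a - b) + nrm (b - c).
Proof. by have := nrm_triangle HA (a - b) (b - c); rewrite addrA subrK. Qed.

Lemma star0 (R : realType) (A : comAlgType R[i]) (star : A -> A) (nrm : A -> R)
  (HA : is_comm_unital_Cstar star nrm) : star 0 = 0.
Proof. have h := star_add HA 0 0; rewrite addr0 in h. by apply: (addrI (star 0)); rewrite addr0 -h. Qed.

Lemma starN (R : realType) (A : comAlgType R[i]) (star : A -> A) (nrm : A -> R)
  (HA : is_comm_unital_Cstar star nrm) a : star (- a) = - star a.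
Proof. by apply/eqP; rewrite -subr_eq0 opprK -(star_add HA) addNr (star0 HA). Qed.

Lemma starB (R : realType) (A : comAlgType R[i]) (star : A -> A) (nrm : A -> R)
  (HA : is_comm_unital_Cstar star nrm) a b : star (a - b) = star a - star b.
Proof. by rewrite (star_add HA) (starN HA). Qed.

Lemma star1 (R : realType) (A : comAlgType R[i]) (star : A -> A) (nrm : A -> R)
  (HA : is_comm_unital_Cstar star nrm) : star 1 = 1.
Proof.
by rewrite -[star 1]mulr1 -{2}(star_invol HA 1) -(star_mul HA) mulr1 (star_invol HA).
Qed.

Lemma star_sc (R : realType) (A : comAlgType R[i]) (star : A -> A) (nrm : A -> R)
  (HA : is_comm_unital_Cstar star nrm) r a : star (real_complex R r *: a) = real_complex R r *: star a.
Proof. by rewrite (star_scale HA) conjc_realR. Qed.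

Lemma nrm_star (R : realType) (A : comAlgType R[i]) (star : A -> A) (nrm : A -> R)
  (HA : is_comm_unital_Cstar star nrm) a : nrm (star a) = nrm a.
Proof.
have key : forall b, nrm b <= nrm (star b).
  move=> b; have := Cstar_identity HA b; have := nrm_submult HA (star b) b.
  have [b0|bn0] := eqVneq (nrm b) 0.
    move=> _ _; rewrite b0; exact: (nrm_ge0 HA).
  have bp : 0 < nrm b by rewrite lt_def bn0 (nrm_ge0 HA).
  move=> H1 H2; rewrite H2 expr2 in H1.
  by rewrite -(ler_pM2r bp).
apply/le_anti/andP; split; last exact: key.
by have := key (star a); rewrite (star_invol HA).
Qed.

Lemma small_le0 (R : realType) (x : R) : (forall e, 0 < e -> x < e) -> x <= 0.
Proof.
move=> h; rewrite leNgt; apply/negP => x0.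
by have := h x x0; rewrite ltxx.
Qed.

Lemma cvgA_uniq (R : realType) (A : comAlgType R[i]) (star : A -> A) (nrm : A -> R)
  (HA : is_comm_unital_Cstar star nrm) u l1 l2 :
  cvgA nrm u l1 -> cvgA nrm u l2 -> l1 = l2.
Proof.
move=> h1 h2; apply/eqP; rewrite -subr_eq0; apply/eqP/(nrm_eq0 HA).
apply/le_anti/andP; split; last exact: (nrm_ge0 HA).
apply: small_le0 => e e0.
have e2 : 0 < e / 2 by rewrite divr_gt0.
have [N1 hN1] := h1 _ e2; have [N2 hN2] := h2 _ e2.
have := hN1 (maxn N1 N2) (leq_maxl _ _); have := hN2 (maxn N1 N2) (leq_maxr _ _).
have := nrm_tri3 HA l1 (u (maxn N1 N2)) l2; rewrite (nrmB HA l1 (u _)).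
move=> a b c; lra.
Qed.

Lemma cvgA_mulr (R : realType) (A : comAlgType R[i]) (star : A -> A) (nrm : A -> R)
  (HA : is_comm_unital_Cstar star nrm) u l w :
  cvgA nrm u l -> cvgA nrm (fun n => u n * w) (l * w).
Proof.
move=> h e e0.
have w0 := nrm_ge0 HA w.
have e1 : 0 < e / (nrm w + 1) by rewrite divr_gt0 // ltr_wpDl.
have [N hN] := h _ e1; exists N => n hn.
rewrite -mulrBl; apply: (le_lt_trans (nrm_submult HA _ _)).
have := hN n hn; set X := nrm _ => hX.
have X0 : 0 <= X := nrm_ge0 HA _.
have -> : e = e / (nrm w + 1) * (nrm w + 1).
  by rewrite divfK // gt_eqF // ltr_wpDl.
have : X * nrm w <= e / (nrm w + 1) * nrm w by rewrite ler_wpM2r // ltW.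
have : e / (nrm w + 1) * nrm w < e / (nrm w + 1) * (nrm w + 1).
  by rewrite ltr_pM2l // ltrDl.
move=> a b; exact: le_lt_trans b a.
Qed.

Lemma geom_small (R : realType) (e : R) : 0 < e -> exists N : nat, 2 * (2^-1) ^+ N < e.
Proof.
move=> e0.
have h2e : 0 <= 2 / e by rewrite divr_ge0 // ltW.
have hb := archi_boundP h2e.
set N := Num.Def.archi_bound _ in hb.
exists N.
have hN : forall n : nat, (n.+1)%:R <= (2 : R) ^+ n.
  elim=> [|n ih]; first by rewrite expr0.
  rewrite exprS -[n.+2]addn1 natrD.
  have : 1 <= (2 : R) ^+ n by rewrite exprn_ege1 ?ler1n. 
  rewrite -[n.+1]addn1 natrD in ih. lra.
have p2 : 0 < (2 : R) ^+ N by rewrite exprn_gt0.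
have := hN N; rewrite -addn1 natrD => h.
rewrite ltr_pdivrMr // in hb.
rewrite exprVn ltr_pdivrMr //.
nra.
Qed.

Lemma sqrt_pos (R : realType) (A : comAlgType R[i]) (star : A -> A) (nrm : A -> R)
  (HA : is_comm_unital_Cstar star nrm) t :
  star t = t -> nrm t <= 2^-1 -> exists y, 1 - t = star y * y.
Proof.
move=> st nt.
pose hf := real_complex R (2^-1).
pose F := fun w : A => hf *: (t + w * w).
pose z := fun n => iter n F 0.
have zS : forall n, z n.+1 = F (z n) by [].
have zs : forall n, star (z n) = z n.
  elim=> [|n ih]; first exact: star0 HA.
  by rewrite zS /F (star_sc HA) (star_add HA) (star_mul HA) ih st.
have h0 : (0 : R) <= 2^-1 by rewrite invr_ge0 ler0n.
have nF : forall w, nrm (F w) <= 2^-1 * (nrm t + nrm w * nrm w).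
  move=> w; rewrite /F (nrm_sc HA) ger0_norm //.
  apply: ler_wpM2l => //.
  apply: le_trans (nrm_triangle HA _ _) _; rewrite lerD2l; exact: (nrm_submult HA w w).
have zb : forall n, nrm (z n) <= 2^-1.
  elim=> [|n ih]; first by rewrite /z /= [nrm _](nrm0 HA).
  rewrite zS; apply: le_trans (nF _) _; have := nrm_ge0 HA (z n); nra.
have FB : forall a b, F a - F b = hf *: ((a - b) * (a + b)).
  move=> a b; rewrite /F -scalerBr; congr (_ *: _); ring.
have zd : forall n, nrm (z n.+1 - z n) <= (2^-1) ^+ n.
  elim=> [|n ih].
    rewrite /z /= subr0 expr0; apply: le_trans (nF _) _.
    have := zb 0; have := nrm_ge0 HA (z 0); rewrite /z /=; nra.
  rewrite (zS n.+1) {2}(zS n) FB (nrm_sc HA) ger0_norm // exprS.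
  apply: ler_wpM2l => //.
  apply: le_trans (nrm_submult HA _ _) _.
  have := nrm_triangle HA (z n.+1) (z n); have := zb n; have := zb n.+1.
  have := nrm_ge0 HA (z n.+1 - z n); have := nrm_ge0 HA (z n.+1 + z n).
  have := exprn_ge0 n h0.
  nra.
have zc : forall n k, nrm (z (n + k)%N - z n) <= 2 * (2^-1)^+n - 2 * (2^-1)^+(n+k)%N.
  move=> n; elim=> [|k ih]; first by rewrite !addn0 !subrr [nrm _](nrm0 HA).
  rewrite addnS; apply: le_trans (nrm_tri3 HA _ (z (n+k)%N) _) _.
  have := zd (n+k)%N; rewrite exprS. lra.
have cauchy : cauchyA nrm z.
  move=> e e0; have [N hN] := geom_small e0; exists N => m n hm hn.
  wlog: m n hm hn / (n <= m)%N.
    move=> W; case: (leqP n m) => h; first exact: W.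
    rewrite (nrmB HA); apply: W => //; exact: ltnW.
  move=> nm; rewrite -(subnKC nm).
  apply: le_lt_trans (zc n (m - n)%N) _.
  have : (2^-1)^+n <= (2^-1 : R)^+N by apply: ler_wiXn2l => //; rewrite invf_le1 ?ler1n.
  have := exprn_ge0 (n + (m - n))%N h0.
  lra.
have [l hl] := nrm_complete HA cauchy.
have sl : star l = l.
  apply: (cvgA_uniq HA _ hl) => e e0.
  have [N hN] := hl e e0; exists N => n hn.
  by rewrite -{1}(zs n) -(starB HA) (nrm_star HA); exact: hN.
have fl : F l = l.
  have L0 := nrm_ge0 HA l.
  apply: (@cvgA_uniq _ _ _ _ HA (fun n => z n.+1)).
    move=> e e0.
    have e1 : 0 < e / (1 + nrm l) by rewrite divr_gt0 // ltr_pwDl.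
    have ee : e / (1 + nrm l) * (1 + nrm l) = e by rewrite divfK // gt_eqF // ltr_pwDl.
    have [N hN] := hl _ e1; exists N => n hn.
    rewrite zS FB (nrm_sc HA) ger0_norm //.
    have := nrm_submult HA (z n - l) (z n + l).
    have := nrm_triangle HA (z n) l; have := zb n.
    have := nrm_ge0 HA (z n - l); have := nrm_ge0 HA (z n + l).
    have := hN n hn.
    set X := nrm (z n - l); set Y := nrm (z n + l); set P := nrm (_ * _).
    move=> h1 h2 h3 h4 h5 h6.
    have : X * (1 + nrm l) < e by rewrite -ee ltr_pM2r // ltr_pwDl.
    nra.
  move=> e e0; have [N hN] := hl e e0; exists N => n hn; apply: hN; exact: leqW.
have ht : t = l + l - l * l.
  have : real_complex R 2 *: F l = real_complex R 2 *: l by rewrite fl.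
  rewrite /F /hf scalerA rcM mulfV ?pnatr_eq0 // rc1 scale1r.
  rewrite -[2 : R]/(2%:R) rmorph_nat scaler_nat mulr2n => h.
  by rewrite -[t](addrK (l * l)) h.
exists (1 - l); rewrite (starB HA) (star1 HA) sl ht; ring.
Qed.

Lemma lincomb5 (A : comPzRingType) (L Rr q1 q2 q3 q4 q5 u1 v1 u2 v2 u3 v3 u4 v4 u5 v5 : A) :
  u1 = v1 -> u2 = v2 -> u3 = v3 -> u4 = v4 -> u5 = v5 ->
  L - Rr = q1 * (u1 - v1) + q2 * (u2 - v2) + q3 * (u3 - v3) + q4 * (u4 - v4) + q5 * (u5 - v5) ->
  L = Rr.
Proof.
move=> -> -> -> -> ->; rewrite !subrr !mulr0 !addr0 => /eqP; rewrite subr_eq0 => /eqP //.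
Qed.

Lemma algM (R : realType) (A : comAlgType R[i]) (x y : R) :
  (real_complex R x)%:A * (real_complex R y)%:A = (real_complex R (x * y))%:A :> A.
Proof. by rewrite mulr_algl scalerA rcM. Qed.

Lemma cvgA_ext (R : realType) (A : comAlgType R[i]) (nrm : A -> R) u v l :
  (forall n, u n = v n) -> cvgA nrm u l -> cvgA nrm v l.
Proof. move=> e h eps he; have [N hN] := h eps he; exists N => n hn; rewrite -e; exact: hN. Qed.

Lemma ip_addl (R : realType) (A : comAlgType R[i]) (star : A -> A) (nrm : A -> R)
  (HA : is_comm_unital_Cstar star nrm) (E : lmodType A) (ip : E -> E -> A)
  (HE : is_Hilbert_module star nrm ip) x y z : ip (x + y) z = ip x z + ip y z.
Proof.
by rewrite (ip_adj HE) (ip_addr HE) (star_add HA) -!(ip_adj HE).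
Qed.

Lemma star_alg (R : realType) (A : comAlgType R[i]) (star : A -> A) (nrm : A -> R)
  (HA : is_comm_unital_Cstar star nrm) r : star (real_complex R r)%:A = (real_complex R r)%:A.
Proof. by rewrite (star_sc HA) (star1 HA). Qed.

Theorem proposition2p3 (R : realType) (A : comAlgType R[i])
    (star : A -> A) (nrm : A -> R) (E : lmodType A) (ip : E -> E -> A)
    (HA : is_comm_unital_Cstar star nrm)
    (HE : is_Hilbert_module star nrm ip)
    (Hcompl : forall M : E -> Prop, submodule M -> closed_set nrm ip M ->
                orth_complemented ip M)
    (xi : E) (Hxi : exists b : A, b * ip xi xi = 1)
    (x_ : nat -> E) (a b : R) (Ha : 0 < a) (Hab : a <= b)
    (Hframe : forall x : E, exists s : A,
        [/\ series_cvgA nrm (fun i => ip2 ip x (x_ i) xi * ip2 ip (x_ i) x xi) s,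
            cle star ((real_complex R a) *: ip2 ip x x xi) s
          & cle star s ((real_complex R b) *: ip2 ip x x xi)]) :
  exists c d : R, [/\ 0 < c, c <= d &
    forall x : E, Lperp ip xi x -> exists s : A,
      [/\ series_cvgA nrm (fun i => ip x (x_ i) * ip (x_ i) x) s,
          cle star ((real_complex R c) *: ip x x) s
        & cle star s ((real_complex R d) *: ip x x)]].
Proof.
set g := ip xi xi.
have [h hg] := Hxi.
have gh : g * h = 1 by rewrite mulrC.
have [k hk] := ip_pos HE xi; rewrite subr0 -/g in hk.
have sg : star g = g by rewrite /g -(ip_adj HE).
have sh : star h = h.
  have e : star h * g = 1 by rewrite -sg -(star_mul HA) gh (star1 HA).
  by rewrite -[star h]mulr1 -gh mulrA e mul1r.
set m := k * h.
have hm : star m * m = h.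
  rewrite /m (star_mul HA) sh.
  apply: (lincomb5 (q1 := h * h) (q2 := h) (q3 := 0) (q4 := 0) (q5 := 0)
     (esym hk) gh (erefl 0) (erefl 0) (erefl 0)); ring.
have mm : star m * g * m = 1.
  rewrite /m (star_mul HA) sh.
  apply: (lincomb5 (q1 := h * h * g) (q2 := g * h + 1) (q3 := 0) (q4 := 0) (q5 := 0)
     (esym hk) gh (erefl 0) (erefl 0) (erefl 0)); ring.
set M := nrm g; set N := nrm h.
have M0 : 0 <= M := nrm_ge0 HA g.
have N0 : 0 <= N := nrm_ge0 HA h.
set tau := (2 * (M + 1))^-1.
set tau2 := (2 * (N + 1))^-1.
have tau0 : 0 < tau by rewrite invr_gt0; lra.
have tau20 : 0 < tau2 by rewrite invr_gt0; lra.
have taue : tau * (2 * (M + 1)) = 1 by rewrite mulVf //; lra.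
have tau2e : tau2 * (2 * (N + 1)) = 1 by rewrite mulVf //; lra.
set c := a * tau.
set d := 2 * b * (N + 1).
have [y1 hy1] : exists y, 1 - real_complex R tau *: g = star y * y.
  apply: (sqrt_pos HA); first by rewrite (star_sc HA) sg.
  rewrite (nrm_sc HA) ger0_norm ?ltW // -/M; nra.
have [y2 hy2] : exists y, 1 - real_complex R tau2 *: h = star y * y.
  apply: (sqrt_pos HA); first by rewrite (star_sc HA) sh.
  rewrite (nrm_sc HA) ger0_norm ?ltW // -/N; nra.
set al := (real_complex R a)%:A : A.
set be := (real_complex R b)%:A : A.
set ga := (real_complex R c)%:A : A.
set de := (real_complex R d)%:A : A.
set T := (real_complex R tau)%:A : A.
set T2 := (real_complex R tau2)%:A : A.
set sa := (real_complex R (Num.sqrt a))%:A : A.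
set sd := (real_complex R (Num.sqrt d))%:A : A.
have d0 : 0 < d by rewrite /d; nra.
have Es : sa * sa = al by rewrite /sa algM -expr2 sqr_sqrtr // ltW.
have Esd : sd * sd = de by rewrite /sd algM -expr2 sqr_sqrtr // ltW.
have Ec : ga = al * T by rewrite /ga /al /T algM.
have Eb : be = de * T2.
  have bd : b = d * tau2.
  rewrite /d; have := tau2e; nra.

  by rewrite /be /de /T2 algM -bd.
rewrite -mulr_algl -/T in hy1.
rewrite -mulr_algl -/T2 in hy2.
set w1 := sa * (m * y1).
set w2 := sd * y2.
have key1 : star w1 * w1 = al * h - ga.
  rewrite /w1 (star_mul HA sa) (star_mul HA m y1) /sa (star_alg HA) -/sa.
  apply: (lincomb5 (q1 := (1 - T * g) * (star m * m)) (q2 := 1) (q3 := (1 - T * g) * al)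
     (q4 := - (sa * sa * (star m * m))) (q5 := - (al * T)) Es Ec hm hy1 gh); ring.
have key2 : star w2 * w2 = de - be * h.
  rewrite /w2 !(star_mul HA) /sd (star_alg HA) -/sd.
  apply: (lincomb5 (q1 := 1 - T2 * h) (q2 := h) (q3 := - (sd * sd))
     (q4 := 0) (q5 := 0) Esd Eb hy2 (erefl 0) (erefl 0)); ring.
have tau_le : tau <= 2^-1 by nra.
exists c, d; split.
- by rewrite /c mulr_gt0.
- rewrite /c /d; nra.
move=> x hx.
have ix : ip xi x = 0 by have := hx 1; rewrite scale1r.
have xi0 : ip x xi = 0 by rewrite (ip_adj HE) ix (star0 HA).
have [s [hs hl hu]] := Hframe x.
have e2 : ip2 ip x x xi = ip x x * g by rewrite /ip2 xi0 mul0r subr0.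
rewrite e2 in hl hu.
have [p hp] := hl; have [q hq] := hu.
rewrite -mulr_algl -/al in hp.
rewrite -mulr_algl -/be in hq.
set P := ip x x.
rewrite -/P in hp hq.
exists (s * (h * h)); split.
- rewrite /series_cvgA; apply: (cvgA_ext _ (cvgA_mulr HA (h * h) hs)) => n /=.
  rewrite mulr_suml; apply: eq_bigr => i _; rewrite /ip2 xi0 ix mul0r mulr0 !subr0 -/g.
  apply: (lincomb5 (q1 := ip x (x_ i) * ip (x_ i) x * (g * h + 1)) (q2 := 0) (q3 := 0)
     (q4 := 0) (q5 := 0) gh (erefl 0) (erefl 0) (erefl 0) (erefl 0)); ring.
- rewrite /cle -mulr_algl -/ga.
  have [W hW] := ip_pos HE (w1 *: x + (p * h * m) *: xi).
  exists W; rewrite -hW subr0.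
  rewrite (ip_addl HA HE) !(ip_addr HE) !(ip_scale HE) ix xi0 !mulr0 !mul0r addr0 add0r.
  rewrite (star_mul HA (p * h) m) (star_mul HA p h) sh -/P -/g.
  apply: (lincomb5 (q1 := h * h) (q2 := - P) (q3 := - (star p * p * (h * h))) (q4 := al * P * h)
     (q5 := 0) hp key1 mm gh (erefl 0)); ring.
- rewrite /cle -mulr_algl -/de.
  have [W hW] := ip_pos HE (w2 *: x + (q * h * m) *: xi).
  exists W; rewrite -hW subr0.
  rewrite (ip_addl HA HE) !(ip_addr HE) !(ip_scale HE) ix xi0 !mulr0 !mul0r addr0 add0r.
  rewrite (star_mul HA (q * h) m) (star_mul HA q h) sh -/P -/g.
  apply: (lincomb5 (q1 := h * h) (q2 := - P) (q3 := - (star q * q * (h * h))) (q4 := - (be * P * h))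
     (q5 := 0) hq key2 mm gh (erefl 0)); ring.
Qed.
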